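(* Let $X$ be a set, let $\mathcal{L}$ be a nest on $X$, and let $Y\subseteq X$. Then $X={\downarrow}Y$ if and only if there exists a cover of $X$ by elements of $\mathcal{L}$ such that no single member of this cover contains $Y$.
   Context: A nest on $X$ is a family of subsets of $X$ totally ordered by inclusion. Define $x\triangleleft_{\mathcal{L}} y$ iff there exists $L\in\mathcal{L}$ with $x\in L$ and $y\notin L$. For $Y\subseteq X$, ${\downarrow}Y=\{x\in X : \exists y\in Y,\ x\triangleleft_{\mathcal{L}} y\}$. A cover of $X$ by elements of $\mathcal{L}$ is a subfamily of $\mathcal{L}$ whose union is $X$. *)

(* Defs.v *)
(* sets are predicates over a carrier type X (X itself is the whole type). *)
Set Implicit Arguments.

Definition subset {X : Type} (A B : X -> Prop) : Prop := forall x, A x -> B x.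

Definition nest {X : Type} (L : (X -> Prop) -> Prop) : Prop :=
  forall A B, L A -> L B -> subset A B \/ subset B A.

Definition tri {X : Type} (L : (X -> Prop) -> Prop) (x y : X) : Prop :=
  exists A, L A /\ A x /\ ~ A y.

Definition down {X : Type} (L : (X -> Prop) -> Prop) (Y : X -> Prop) : X -> Prop :=
  fun x => exists y, Y y /\ tri L x y.

Definition cover_by {X : Type} (L C : (X -> Prop) -> Prop) : Prop :=
  (forall A, C A -> L A) /\ (forall x, exists A, C A /\ A x).

(* Main.v *)
Require Import Defs.
From Stdlib Require Import Classical.

Theorem theorem4p1 (X : Type) (L : (X -> Prop) -> Prop) (Y : X -> Prop) :
  nest L ->
  ((forall x : X, down L Y x) <->
   exists C : (X -> Prop) -> Prop, cover_by L C /\ forall A, C A -> ~ subset Y A).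
Proof.
  intros _. split.
  - intros H. exists (fun A => L A /\ ~ subset Y A). split; [split|].
    + intros A [HA _]. exact HA.
    + intros x. destruct (H x) as [y [Hy [A [HA [Ax Ay]]]]].
      exists A. split; [split|]; auto.
    + intros A [_ HA]. exact HA.
  - intros [C [[HCL HCov] HC]] x.
    destruct (HCov x) as [A [CA Ax]].
    assert (Hn := HC A CA).
    destruct (not_all_ex_not _ _ Hn) as [y Hy].
    exists y. split.
    + apply NNPP. intros Hny. apply Hy. intros Yy. contradiction.
    + exists A. split; [apply HCL; exact CA|]. split; [exact Ax|].
      intros Ay. apply Hy. intros _. exact Ay.
Qed.
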